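(* Let $\mathcal{X}=\{A\in\mathcal{M}_d: A=A^\dagger,\ \operatorname{tr}A=0\}$, viewed as a real vector space, with basis consisting of $\sigma_x^{jk}=|j\rangle\langle k|+|k\rangle\langle j|$ and $\sigma_y^{jk}=-i(|j\rangle\langle k|-|k\rangle\langle j|)$ for $1\le j<k\le d$, and $\sigma_z^j=|j\rangle\langle j|-|j+1\rangle\langle j+1|$ for $j=1,\dots,d-1$. Let $\mathcal{V}=\{A\mapsto UAU^\dagger: U\in\mathcal{M}_d\text{ unitary}\}$, regarded as a set of real-linear maps on $\mathcal{X}$, and let $\mathrm{zerospan}_{\mathbb{R}}\mathcal{V}$ denote the set of all finite real linear combinations $\sum_i\lambda_i V_i$ with $V_i\in\mathcal{V}$, $\lambda_i\in\mathbb{R}$ and $\sum_i\lambda_i=0$. Then for each basis vector $B$ of $\mathcal{X}$ listed above there exists $T\in\mathrm{zerospan}_{\mathbb{R}}\mathcal{V}$ with $T(B)=B$ and $T(B')=0$ for every other basis vector $B'$ in the list.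
   Context: $\{|1\rangle,\dots,|d\rangle\}$ is the standard basis of $\mathbb{C}^d$. *)

(* Defs.v *)
From HB Require Import structures.
From mathcomp Require Import all_boot all_order all_algebra.
From mathcomp Require Import reals.
From mathcomp.real_closed Require Import complex.
Set Implicit Arguments. Unset Strict Implicit. Unset Printing Implicit Defensive.
Import Order.TTheory GRing.Theory Num.Theory.
Local Open Scope ring_scope.
Local Open Scope complex_scope.

Definition dagger (R : rcfType) (d : nat) (A : 'M[R[i]]_d) : 'M[R[i]]_d :=
  (map_mx (@conjc R) A)^T.

Definition unitary (R : rcfType) (d : nat) (U : 'M[R[i]]_d) : Prop :=
  dagger U *m U = 1%:M /\ U *m dagger U = 1%:M.

(* Indices of the listed basis of X (0-based: |j> is the basis vector
   with index j : 'I_d, i.e. paper's |j+1>). *)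
Inductive pauli_idx : Type :=
| SX of nat & nat
| SY of nat & nat
| SZ of nat.

Definition valid_idx (d : nat) (b : pauli_idx) : Prop :=
  match b with
  | SX j k => (j < k < d)%N
  | SY j k => (j < k < d)%N
  | SZ j => (j.+1 < d)%N
  end.

Definition ket_bra (R : rcfType) (d j k : nat) : 'M[R[i]]_d :=
  \matrix_(a < d, b < d) (if ((a == j :> nat) && (b == k :> nat)) then 1 else 0).

Definition basis_mx (R : rcfType) (d : nat) (b : pauli_idx) : 'M[R[i]]_d :=
  match b with
  | SX j k => ket_bra R d j k + ket_bra R d k j
  | SY j k => (- 'i) *: (ket_bra R d j k - ket_bra R d k j)
  | SZ j => ket_bra R d j j - ket_bra R d j.+1 j.+1
  end.

Definition comb_map (R : rcfType) (d n : nat) (lam : 'I_n -> R)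
  (U : 'I_n -> 'M[R[i]]_d) (A : 'M[R[i]]_d) : 'M[R[i]]_d :=
  \sum_(m < n) ((lam m)%:C *: (U m *m A *m dagger (U m))).

Definition in_zerospan (R : rcfType) (d : nat)
  (T : 'M[R[i]]_d -> 'M[R[i]]_d) : Prop :=
  exists (n : nat) (lam : 'I_n -> R) (U : 'I_n -> 'M[R[i]]_d),
    (forall m, unitary (U m)) /\ \sum_(m < n) lam m = 0 /\
    (forall A, T A = comb_map lam U A).

(* Main.v *)
Require Import Defs.
From HB Require Import structures.
From mathcomp Require Import all_boot all_order all_algebra all_fingroup.
From mathcomp Require Import reals.
From mathcomp.real_closed Require Import complex.
From mathcomp Require Import ring zify.
Import Order.TTheory GRing.Theory Num.Theory.
Local Open Scope ring_scope.
Local Open Scope complex_scope.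
Set Implicit Arguments. Unset Strict Implicit. Unset Printing Implicit Defensive.

Lemma split_lsh m n (i : 'I_m) : split (lshift n i) = inl i.
Proof. exact: (unsplitK (inl i : 'I_m + 'I_n)). Qed.
Lemma split_rsh m n (i : 'I_n) : split (rshift m i) = inr i.
Proof. exact: (unsplitK (inr i : 'I_m + 'I_n)). Qed.

Section Gen.
Variable R : realType.
Variable d : nat.
Local Notation M := 'M[R[i]]_d.

Fact Ad_key : unit. Proof. by []. Qed.
Definition Ad (U : M) (A : M) : M := locked_with Ad_key (U *m A *m dagger U).
Lemma Ad_def U A : Ad U A = U *m A *m dagger U.
Proof. by rewrite /Ad unlock. Qed.

Definition in_span (s : R) (T : M -> M) : Prop :=
  exists (n : nat) (lam : 'I_n -> R) (U : 'I_n -> M),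
    (forall m, unitary (U m)) /\ \sum_(m < n) lam m = s /\
    (forall A, T A = comb_map lam U A).

Lemma span_ext s T T' : in_span s T -> (forall A, T A = T' A) -> in_span s T'.
Proof. by move=> [n [lam [U [HU [Hs HT]]]]] E; exists n, lam, U; do 2 split=> //; move=> A; rewrite -E; exact: HT. Qed.

Lemma span_Ad (U : M) : unitary U -> in_span 1 (Ad U).
Proof.
move=> HU; exists 1%N, (fun _ => 1), (fun _ => U); split=> //; split.
  by rewrite big_ord1.
by move=> A; rewrite /comb_map big_ord1 scale1r Ad_def.
Qed.

Lemma span_zero : in_span 0 (fun _ => 0).
Proof.
exists 0%N, (fun _ => 0), (fun _ => 1%:M); split; first by case.
by rewrite big_ord0; split=> // A; rewrite /comb_map big_ord0.
Qed.

Lemma span_add s t T1 T2 : in_span s T1 -> in_span t T2 ->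
  in_span (s + t) (fun A => T1 A + T2 A).
Proof.
move=> [n1 [l1 [U1 [H1 [S1 E1]]]]] [n2 [l2 [U2 [H2 [S2 E2]]]]].
exists (n1 + n2)%N, (fun i => match split i with inl a => l1 a | inr b => l2 b end),
  (fun i => match split i with inl a => U1 a | inr b => U2 b end).
split; first by move=> i; case: (split i).
split.
  by rewrite big_split_ord /= -S1 -S2; congr (_ + _); apply: eq_bigr => i _;
    rewrite ?split_lsh ?split_rsh.
move=> A; rewrite E1 E2 /comb_map big_split_ord /=; congr (_ + _);
  by apply: eq_bigr => i _; rewrite ?split_lsh ?split_rsh.
Qed.

Lemma span_scale s c T : in_span s T -> in_span (c * s) (fun A => c%:C *: T A).
Proof.
move=> [n [l [U [H [S E]]]]]; exists n, (fun m => c * l m), U; split=> //; split.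
  by rewrite -S mulr_sumr.
move=> A; rewrite E /comb_map scaler_sumr; apply: eq_bigr => i _.
by rewrite scalerA rmorphM.
Qed.

Lemma span_sum n (s : 'I_n -> R) (T : 'I_n -> M -> M) :
  (forall i, in_span (s i) (T i)) ->
  in_span (\sum_(i < n) s i) (fun A => \sum_(i < n) T i A).
Proof.
elim: n s T => [|n IH] s T H.
  by rewrite big_ord0; apply: span_ext span_zero _ => A; rewrite big_ord0.
rewrite big_ord_recr /=; apply: span_ext.
  apply: span_add; [apply: (IH (fun i => s (widen_ord (leqnSn n) i))
     (fun i => T (widen_ord (leqnSn n) i))) => i; exact: H | exact: H].
by move=> A; rewrite big_ord_recr.
Qed.

Lemma dagger_mul (A B : M) : dagger (A *m B) = dagger B *m dagger A.
Proof. by rewrite /dagger map_mxM trmx_mul. Qed.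

Lemma Ad_mul (U V A : M) : Ad (U *m V) A = Ad U (Ad V A).
Proof. by rewrite !Ad_def dagger_mul !mulmxA. Qed.

Lemma unitary_mul (U V : M) : unitary U -> unitary V -> unitary (U *m V).
Proof.
move=> [HU1 HU2] [HV1 HV2]; split; rewrite dagger_mul.
  by rewrite mulmxA -(mulmxA _ _ U) HU1 mulmx1 HV1.
by rewrite mulmxA -(mulmxA _ V) HV2 mulmx1 HU2.
Qed.

Lemma Ad_comb (V : M) n (lam : 'I_n -> R) (U : 'I_n -> M) (A : M) :
  Ad V (comb_map lam U A) = comb_map lam (fun m => V *m U m) A.
Proof.
rewrite !Ad_def /comb_map mulmx_sumr mulmx_suml; apply: eq_bigr => i _.
by rewrite -scalemxAr -scalemxAl dagger_mul !mulmxA.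
Qed.

Lemma span_compAd (V : M) s T : unitary V -> in_span s T ->
  in_span s (fun A => Ad V (T A)).
Proof.
move=> HV [n [l [U [H [S E]]]]]; exists n, l, (fun m => V *m U m); split.
  by move=> m; apply: unitary_mul.
by split=> // A; rewrite E Ad_comb.
Qed.

End Gen.

Section Mats.
Variable R : realType.
Variable d : nat.
Local Notation M := 'M[R[i]]_d.

Definition sg (b : bool) : R[i] := if b then -1 else 1.
Definition Dg (p : 'I_d -> bool) : M := diag_mx (\row_x sg (p x)).

Lemma sg_conj b : (sg b)^* = sg b.
Proof. by case: b; rewrite /sg ?rmorphN ?rmorph1. Qed.

Lemma sgsg b : sg b * sg b = 1.
Proof. by case: b; rewrite /sg ?mulrNN mulr1. Qed.

Lemma dagger_Dg p : dagger (Dg p) = Dg p.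
Proof.
rewrite /dagger /Dg map_diag_mx tr_diag_mx; congr diag_mx.
by apply/matrixP => i j; rewrite !mxE; exact: sg_conj.
Qed.

Lemma Dg_sq p : Dg p *m Dg p = 1%:M.
Proof.
apply/matrixP => i j; rewrite /Dg mul_diag_mx !mxE.
by case: (i == j); rewrite /= ?mulr1n ?mulr0n ?mulr0 // sgsg.
Qed.

Lemma unitary_Dg p : unitary (Dg p).
Proof. by rewrite /unitary dagger_Dg Dg_sq. Qed.

Lemma AdDgE p (A : M) x y : Ad (Dg p) A x y = sg (p x) * sg (p y) * A x y.
Proof.
rewrite !Ad_def dagger_Dg /Dg mul_mx_diag mul_diag_mx !mxE.
by rewrite mulrAC.
Qed.

Definition Pm (s : {perm 'I_d}) : M := perm_mx s.

Lemma dagger_Pm s : dagger (Pm s) = Pm s^-1.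
Proof.
rewrite /dagger /Pm -tr_perm_mx; congr trmx.
by apply/matrixP => i j; rewrite !mxE conjc_nat.
Qed.

Lemma unitary_Pm s : unitary (Pm s).
Proof.
by rewrite /unitary dagger_Pm /Pm -!perm_mxM mulVg mulgV perm_mx1.
Qed.

Lemma AdPmE s (A : M) x y : Ad (Pm s) A x y = A (s x) (s y).
Proof.
by rewrite !Ad_def dagger_Pm /Pm -row_permE -col_permE !mxE.
Qed.

End Mats.
Arguments Pm {R d}.
Arguments Dg {R d}.
Arguments sg {R}.

Lemma span_eq (R : realType) d s t (T : 'M[R[i]]_d -> 'M[R[i]]_d) :
  in_span s T -> s = t -> in_span t T.
Proof. by move=> H <-. Qed.

Lemma dagger1 (R : realType) d : dagger (1%:M : 'M[R[i]]_d) = 1%:M.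
Proof. by rewrite /dagger map_mx1 trmx1. Qed.

Lemma unitary_one (R : realType) d : unitary (1%:M : 'M[R[i]]_d).
Proof. by rewrite /unitary dagger1 mulmx1. Qed.

Lemma eq_sym_neq (T : eqType) (a b : T) : a != b -> b != a.
Proof. by rewrite eq_sym. Qed.

Section SXY.
Variable R : realType.
Variable d : nat.
Local Notation M := 'M[R[i]]_d.
Variables (j k : 'I_d).
Hypothesis hjk : j != k.
Variable e : R.

Definition tau := tperm j k.
Definition YY (A : M) : M := A + e%:C *: Ad (Pm tau) A.
Definition TXY (A : M) : M :=
  (8^-1 : R)%:C *: (YY A + ((-1 : R)%:C *: Ad (Dg (fun x => x == j)) (YY A) +
    ((-1 : R)%:C *: Ad (Dg (fun x => x == k)) (YY A) +
      Ad (Dg (fun x => (x == j) || (x == k))) (YY A)))).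

Lemma span_TXY : in_span 0 TXY.
Proof.
have HY : in_span (1 + e * 1) YY.
  apply: span_add; first by apply: span_ext (span_Ad (@unitary_one R d)) _ => A; rewrite !Ad_def dagger1 mulmx1 mul1mx.
  by apply: span_scale; apply: span_Ad; apply: unitary_Pm.
apply: span_eq.
  apply: span_scale; apply: span_add; first exact: HY.
  apply: span_add; first by apply: span_scale; apply: span_compAd HY; apply: unitary_Dg.
  apply: span_add; first by apply: span_scale; apply: span_compAd HY; apply: unitary_Dg.
  by apply: span_compAd HY; apply: unitary_Dg.
by ring.
Qed.

Lemma TXYE (A : M) x y : TXY A x y =
  if ((x == j) && (y == k)) || ((x == k) && (y == j))
  then 2^-1 * (A x y + e%:C * A y x) else 0.
Proof.
have hkj : k != j by rewrite eq_sym.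
rewrite /TXY /YY !(mxE, AdDgE, AdPmE) /tau.
have i8 : (8^-1 : R)%:C = 8^-1 by rewrite fmorphV rmorph_nat.
rewrite i8.
have m1 : (-1 : R)%:C = -1 by rewrite rmorphN1.
rewrite m1.
have n8 : (8 : R[i]) != 0 by rewrite pnatr_eq0.
have n2 : (2 : R[i]) != 0 by rewrite pnatr_eq0.
case: (eqVneq x j) => [xj|xj]; case: (eqVneq x k) => [xk|xk];
case: (eqVneq y j) => [yj|yj]; case: (eqVneq y k) => [yk|yk];
  try subst x; try subst y;
  try (exfalso; move/negP: hjk; apply; apply/eqP; congruence).
all: rewrite ?tpermL ?tpermR /sg /= ?eqxx ?(negbTE hjk) ?(negbTE hkj) ?(negbTE xj) ?(negbTE yj) ?(negbTE xk) ?(negbTE yk) /=.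
all: rewrite ?(tpermD (eq_sym_neq xj) (eq_sym_neq xk)) ?(tpermD (eq_sym_neq yj) (eq_sym_neq yk)).
all: by field.
Qed.
Lemma TXY_form (A : M) : e * e = 1 ->
  TXY A = (2^-1 * (A j k + e%:C * A k j)) *: (ket_bra R d j k + e%:C *: ket_bra R d k j).
Proof.
move=> he; have hE : e%:C * e%:C = 1 :> R[i] by rewrite -rmorphM he rmorph1.
have hkj : k != j by rewrite eq_sym.
apply/matrixP => x y; rewrite TXYE !mxE !val_eqE.
case: (eqVneq x j) => [xj|xj]; case: (eqVneq x k) => [xk|xk];
case: (eqVneq y j) => [yj|yj]; case: (eqVneq y k) => [yk|yk];
  try subst x; try subst y;
  try (exfalso; move/negP: hjk; apply; apply/eqP; congruence).
all: rewrite /= ?eqxx ?(negbTE hjk) ?(negbTE hkj) ?(negbTE xj) ?(negbTE yj) ?(negbTE xk) ?(negbTE yk) /=.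
all: try by ring.
transitivity (2^-1 * (e%:C * e%:C * A k j + e%:C * A j k)); first by rewrite hE mul1r.
ring.
Qed.
End SXY.

Lemma neq_ord d (a b : 'I_d) : (a : nat) <> b -> a != b.
Proof. by move=> h; apply/eqP => E; apply: h; rewrite E. Qed.

Section SZ.
Variable R : realType.
Variable d : nat.
Local Notation M := 'M[R[i]]_d.
Variables (jo j1 : 'I_d).
Hypothesis hj1 : (j1 : nat) = jo.+1.

Definition cnd (a b : 'I_d) : bool := ((a <= jo)%N && (jo < b)%N).
Definition cf (a b : 'I_d) : R := (cnd a b)%:R / d%:R.
Definition pi (a b : 'I_d) : {perm 'I_d} := tperm jo a * tperm j1 b.
Definition pi' (a b : 'I_d) : {perm 'I_d} := tperm jo j1 * pi a b.

Definition WW (A : M) : M := \sum_(a < d) \sum_(b < d)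
  (cf a b)%:C *: (Ad (Pm (pi a b)) A + (-1 : R)%:C *: Ad (Pm (pi' a b)) A).

Definition TZ (A : M) : M :=
  (4^-1 : R)%:C *: (WW A + (Ad (Dg (fun x => x == jo)) (WW A) +
    (Ad (Dg (fun x => x == j1)) (WW A) +
      Ad (Dg (fun x => (x == jo) || (x == j1))) (WW A)))).

Lemma span_WW : in_span 0 WW.
Proof.
apply: span_eq.
  apply: span_sum => a; apply: span_sum => b; apply: span_scale.
  apply: span_add; first by apply: span_Ad; apply: unitary_Pm.
  by apply: span_scale; apply: span_Ad; apply: unitary_Pm.
by rewrite big1 // => a _; rewrite big1 // => b _; ring.
Qed.

Lemma span_TZ : in_span 0 TZ.
Proof.
apply: span_eq.
  apply: span_scale; apply: span_add; first exact: span_WW.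
  apply: span_add; first by apply: span_compAd span_WW; apply: unitary_Dg.
  apply: span_add; first by apply: span_compAd span_WW; apply: unitary_Dg.
  by apply: span_compAd span_WW; apply: unitary_Dg.
by ring.
Qed.

Definition cZ (A : M) : R[i] :=
  \sum_(a < d) \sum_(b < d) (cf a b)%:C * (A a a - A b b).

Lemma WWE (A : M) x y : WW A x y =
  \sum_(a < d) \sum_(b < d) (cf a b)%:C *
     (A (pi a b x) (pi a b y) - A (pi' a b x) (pi' a b y)).
Proof.
rewrite summxE; apply: eq_bigr => a _; rewrite summxE; apply: eq_bigr => b _.
by rewrite !(mxE, AdPmE) rmorphN1 mulN1r.
Qed.

Lemma pi_jo a b : cnd a b -> pi a b jo = a /\ pi a b j1 = b /\
   pi' a b jo = b /\ pi' a b j1 = a.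
Proof.
move=> /andP [ha hb].
have aj1 : j1 != a by apply: neq_ord; lia.
have bj : b != a by apply: neq_ord; lia.
have jj : jo != j1 by apply: neq_ord; lia.
have aj : a != j1 by apply: neq_ord; lia.
rewrite /pi' /pi !permM tpermL tpermR tpermL (tpermD aj1 bj) (tpermD jj aj) tpermL.
by rewrite tpermL (tpermD aj1 bj).
Qed.

Lemma WW_jo (A : M) : WW A jo jo = cZ A.
Proof.
rewrite WWE; apply: eq_bigr => a _; apply: eq_bigr => b _.
case h: (cnd a b); last by rewrite /cf h /= mul0r raddf0 !mul0r.
by have [-> [_ [-> _]]] := pi_jo h.
Qed.

Lemma WW_j1 (A : M) : WW A j1 j1 = - cZ A.
Proof.
rewrite WWE /cZ -sumrN; apply: eq_bigr => a _; rewrite -sumrN; apply: eq_bigr => b _.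
case h: (cnd a b); last by rewrite /cf h /= mul0r raddf0 !mul0r oppr0.
have [_ [-> [_ ->]]] := pi_jo h; ring.
Qed.

Lemma WW_out (A : M) x y : x != jo -> x != j1 -> y != jo -> y != j1 ->
  WW A x y = 0.
Proof.
move=> h1 h2 h3 h4; rewrite WWE big1 // => a _; rewrite big1 // => b _.
rewrite /pi' !permM (tpermD (eq_sym_neq h1) (eq_sym_neq h2)).
by rewrite (tpermD (eq_sym_neq h3) (eq_sym_neq h4)) subrr mulr0.
Qed.

Lemma TZE (A : M) x y : TZ A x y =
  if x == y then ((x == jo)%:R - (x == j1)%:R) * cZ A else 0.
Proof.
have jj : jo != j1 by apply: neq_ord; lia.
have jj' : j1 != jo by rewrite eq_sym.
rewrite /TZ !(mxE, AdDgE).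
have i4 : (4^-1 : R)%:C = 4^-1 by rewrite fmorphV rmorph_nat.
rewrite i4.
have n4 : (4 : R[i]) != 0 by rewrite pnatr_eq0.
case: (eqVneq x jo) => [xj|xj]; case: (eqVneq x j1) => [xk|xk];
case: (eqVneq y jo) => [yj|yj]; case: (eqVneq y j1) => [yk|yk];
  try subst x; try subst y;
  try (exfalso; move/negP: jj; apply; apply/eqP; congruence).
all: rewrite /sg /= ?eqxx ?(negbTE jj) ?(negbTE jj') ?(negbTE xj) ?(negbTE yj) ?(negbTE xk) ?(negbTE yk) /=.
all: rewrite ?WW_jo ?WW_j1 ?(WW_out A xj xk yj yk) ?(negbTE (eq_sym_neq yj)) ?(negbTE (eq_sym_neq yk)).
all: by (try case: ifP => _); field.
Qed.

Lemma TZ_form (A : M) : TZ A = cZ A *: (ket_bra R d jo jo - ket_bra R d j1 j1).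
Proof.
have jj : jo != j1 by apply: neq_ord; lia.
apply/matrixP => x y; rewrite TZE !mxE !val_eqE.
case: (eqVneq x y) => [<-|xy].
  by rewrite !andbb; case: (x == jo); case: (x == j1); rewrite /=; ring.
case: (eqVneq x jo) => [xj|xj]; case: (eqVneq y jo) => [yj|yj];
  case: (eqVneq x j1) => [xk|xk]; case: (eqVneq y j1) => [yk|yk]; rewrite /=;
  try (exfalso; move/negP: xy; apply; apply/eqP; congruence); ring.
Qed.

Lemma sum_pick (F : 'I_d -> R[i]) c : \sum_(a < d) F a * (a == c)%:R = F c.
Proof.
rewrite (bigD1 c) //= eqxx mulr1 big1 ?addr0 // => a /negbTE ->.
by rewrite mulr0.
Qed.

Lemma cZ_diag0 (A : M) : (forall a, A a a = 0) -> cZ A = 0.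
Proof.
by move=> h; rewrite /cZ big1 // => a _; rewrite big1 // => b _; rewrite !h subrr mulr0.
Qed.

Lemma cZ_tr (A : M) : \sum_(a < d) A a a = 0 ->
  cZ A = \sum_(a < d) ((a <= jo)%N)%:R * A a a.
Proof.
move=> htr.
have d0 : (d%:R : R[i]) != 0 by rewrite pnatr_eq0 -lt0n (leq_ltn_trans (leq0n _) (ltn_ord jo)).
pose p (a : 'I_d) : R[i] := ((a <= jo)%N)%:R.
pose q (a : 'I_d) : R[i] := ((jo < a)%N)%:R.
have pq a : p a + q a = 1.
  by rewrite /p /q; case: (leqP a jo) => /=; rewrite ?add0r ?addr0.
have E1 : cZ A = d%:R^-1 * (\sum_(a < d) \sum_(b < d) (p a * A a a) * q b
                       - \sum_(a < d) \sum_(b < d) p a * (q b * A b b)).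
  rewrite /cZ -sumrB mulr_sumr; apply: eq_bigr => a _.
  rewrite -sumrB mulr_sumr; apply: eq_bigr => b _.
  rewrite /cf /cnd rmorphM fmorphV !rmorph_nat /p /q.
  by case: (a <= jo)%N; case: (jo < b)%N; rewrite /=; ring.
rewrite E1 -!big_distrlr /=.
set S := \sum_(a < d) p a * A a a.
set S' := \sum_(b < d) q b * A b b.
set Np := \sum_(a < d) p a.
set Nq := \sum_(b < d) q b.
have hN : Np + Nq = d%:R.
  rewrite /Np /Nq -big_split /=.
  rewrite (eq_bigr (fun _ => 1)); last by move=> a _; exact: pq.
  by rewrite sumr_const card_ord.
have hS : S + S' = 0.
  rewrite /S /S' -big_split /=; transitivity (\sum_(a < d) A a a); last exact: htr.
  apply: eq_bigr => a _.
  by rewrite -mulrDl pq mul1r.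
have -> : S' = - S by rewrite -(subr0 S') -hS; ring.
have -> : Np = d%:R - Nq by rewrite -hN; ring.
by field.
Qed.

Lemma sum_pickn (F : 'I_d -> R[i]) n (h : (n < d)%N) :
  \sum_(a < d) F a * ((a : nat) == n)%:R = F (Ordinal h).
Proof. exact: (sum_pick F (Ordinal h)). Qed.

Lemma cZ_SZ j' (h : (j'.+1 < d)%N) :
  cZ (ket_bra R d j' j' - ket_bra R d j'.+1 j'.+1) = ((j' == jo :> nat))%:R.
Proof.
rewrite cZ_tr.
  rewrite (eq_bigr (fun a : 'I_d => ((a <= jo)%N)%:R * ((a : nat) == j')%:R - ((a <= jo)%N)%:R * ((a : nat) == j'.+1)%:R)); last first.
    by move=> a _; rewrite !mxE !andbb mulrBr; case: eqP => _; case: eqP => _; rewrite /= ?mulr1 ?mulr0.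
  rewrite sumrB (sum_pickn _ h) (sum_pickn _ (ltnW h)) /=.
  by case: ltngtP => h1; rewrite /= ?subr0 ?subrr.
rewrite (eq_bigr (fun a : 'I_d => 1 * ((a : nat) == j')%:R - 1 * ((a : nat) == j'.+1)%:R)); last first.
  by move=> a _; rewrite !mxE !andbb !mul1r; case: eqP => _; case: eqP => _.
by rewrite sumrB (sum_pickn _ h) (sum_pickn _ (ltnW h)) subrr.
Qed.

End SZ.

Ltac crunch := repeat match goal with
  | |- context[(?a == ?b :> nat)] => case: (a =P b) => ?
  end.

Ltac fin2 := rewrite /=; field; rewrite pnatr_eq0.

Lemma basis_diag0 (R : realType) d (b : pauli_idx) (a : 'I_d) :
  valid_idx d b -> (forall j, b <> SZ j) -> basis_mx R d b a a = 0.
Proof.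
case: b => [j k|j k|j] /= hv hz; last by case: (hz j).
  move/andP: hv => [h1 h2]; rewrite !mxE; crunch; try (exfalso; lia); rewrite /=; ring.
move/andP: hv => [h1 h2]; rewrite !mxE; crunch; try (exfalso; lia); rewrite /=; ring.
Qed.

Unset Implicit Arguments.
Set Strict Implicit.

Theorem lemma1 (R : realType) (d : nat) (b : pauli_idx) :
  valid_idx d b ->
  exists T : 'M[R[i]]_d -> 'M[R[i]]_d,
    in_zerospan T /\
    T (basis_mx R d b) = basis_mx R d b /\
    (forall b' : pauli_idx, valid_idx d b' -> b' <> b ->
       T (basis_mx R d b') = 0).
Proof.
have n2 : (2 : R[i]) != 0 by rewrite pnatr_eq0.
case: b => [j k|j k|j] /= hv.
- have /andP [hjk hk] := hv.
  pose jo : 'I_d := Ordinal (ltn_trans hjk hk).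
  pose ko : 'I_d := Ordinal hk.
  have njk : jo != ko by apply: neq_ord => /=; lia.
  exists (TXY jo ko 1); split; first exact: span_TXY.
  split.
    rewrite TXY_form ?mulr1 // rmorph1 scale1r.
    set c := (2^-1 * _).
    have -> : c = 1.
      rewrite /c /basis_mx !mxE /=.
      by crunch; try (exfalso; lia); rewrite /=; field.
    by rewrite scale1r.
  move=> b' hv' hne; rewrite TXY_form ?mulr1 // rmorph1 scale1r.
  apply/eqP; rewrite scaler_eq0; apply/orP; left; apply/eqP.
  case: b' hv' hne => [j' k'|j' k'|j'] /= hv' hne; rewrite !mxE /=;
    try (move/andP: hv' => [? ?]);
    by crunch; try (exfalso; lia); try (exfalso; apply: hne; congruence); rewrite /=; field.
- have /andP [hjk hk] := hv.
  pose jo : 'I_d := Ordinal (ltn_trans hjk hk).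
  pose ko : 'I_d := Ordinal hk.
  have njk : jo != ko by apply: neq_ord => /=; lia.
  exists (TXY jo ko (-1)); split; first exact: span_TXY.
  split.
    rewrite TXY_form ?mulrNN ?mulr1 // rmorphN1 scaleN1r.
    set c := (2^-1 * _).
    have -> : c = - 'i.
      rewrite /c !mxE /=.
      by crunch; try (exfalso; lia); rewrite /=; field.
    by [].
  move=> b' hv' hne; rewrite TXY_form ?mulrNN ?mulr1 //.
  apply/eqP; rewrite scaler_eq0; apply/orP; left; apply/eqP.
  case: b' hv' hne => [j' k'|j' k'|j'] /= hv' hne; rewrite !mxE /=;
    try (move/andP: hv' => [? ?]);
    by crunch; try (exfalso; lia); try (exfalso; apply: hne; congruence); rewrite /=; field.
- pose jo : 'I_d := Ordinal (ltnW hv).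
  pose j1 : 'I_d := Ordinal hv.
  exists (TZ jo j1); split; first exact: span_TZ.
  split.
    rewrite (@TZ_form R d jo j1 (erefl _)) (cZ_SZ R jo hv) eqxx scale1r.
    by [].
  move=> b' hv' hne; rewrite (@TZ_form R d jo j1 (erefl _)).
  case: b' hv' hne => [j' k'|j' k'|j'] /= hv' hne.
  + rewrite cZ_diag0 ?scale0r // => a.
    by have := @basis_diag0 R d (SX j' k') a hv'; apply.
  + rewrite cZ_diag0 ?scale0r // => a.
    by have := @basis_diag0 R d (SY j' k') a hv'; apply.
  + rewrite (cZ_SZ R jo hv').
    have -> : (j' == jo :> nat) = false by apply/eqP => E; apply: hne; rewrite E.
    by rewrite scale0r.
Qed.
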